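(* Let $\psi:\mathcal{Q}\to\mathcal{P}$ be a full upper semilattice morphism with $\mathcal{P},\mathcal{Q}$ finite and $\uparrow\psi(\mathcal{Q})=\mathcal{P}$, and let $S\subseteq\mathcal{P}$ be a spread. If $\min S\subseteq\psi(\mathcal{Q})$ and $\operatorname{cover}S\subseteq\psi(\mathcal{Q})$, then $\mathbb{k}_S\cong\mathrm{Lan}_\psi(\mathbb{k}_{\lfloor S\rfloor_\psi})$ in $\operatorname{rep}\mathcal{P}$; in particular $\mathbb{k}_S$ is in the essential image of $\mathrm{Lan}_\psi$.
   Context: Fix a field $\mathbb{k}$. Upper semilattices have joins of finite nonempty subsets; $\psi$ full means $\psi(q)\le\psi(q')\Rightarrow q\le q'$; upper semilattice morphisms preserve such joins. $\uparrow X=\{p:\exists x\in X,x\le p\}$; $\operatorname{cover}X=\min(\uparrow X\setminus X)$. A spread is a nonempty convex zigzag-connected subset; $\mathbb{k}_S$ is the indicator representation of a convex set $S$. $\lfloor p\rfloor_\psi=\bigvee\{q\in\mathcal{Q}:\psi(q)\le p\}$ and $\lfloor S\rfloor_\psi=\{\lfloor s\rfloor_\psi: s\in S\}$. $\mathrm{Lan}_\psi:\operatorname{rep}\mathcal{Q}\to\operatorname{rep}\mathcal{P}$ is the left adjoint of restriction along $\psi$, given by $N\mapsto N\circ\lfloor-\rfloor_\psi$; $\operatorname{rep}$ of a finite poset is the category of functors to finite-dimensional vector spaces. *)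

(* Defs.v *)
From HB Require Import structures.
From mathcomp Require Import all_boot all_order all_algebra.
Set Implicit Arguments.
Unset Strict Implicit.
Unset Printing Implicit Defensive.
Import Order.Theory GRing.Theory.
Local Open Scope order_scope.

Section Poset.
Context {d : Order.disp_t} {T : finPOrderType d}.

Definition upset (X : {set T}) : {set T} := [set p | [exists x in X, x <= p]].

Definition minimals (X : {set T}) : {set T} :=
  [set x in X | [forall y in X, (y <= x) ==> (y == x)]].

Definition cover_set (X : {set T}) : {set T} := minimals (upset X :\: X).

Definition convex (S : {set T}) : Prop :=
  forall x y z, x \in S -> z \in S -> x <= y -> y <= z -> y \in S.

Definition zigzag_connected (S : {set T}) : Prop :=
  forall x y, x \in S -> y \in S ->
    exists s : seq T, [/\ path (fun a b : T => a >=< b) x s,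
                          all (fun a => a \in S) s & last x s = y].

Definition spread (S : {set T}) : Prop :=
  S != set0 /\ convex S /\ zigzag_connected S.
End Poset.

(* A representation: finite dimension at each point, and a matrix for each pair
   (acting on row vectors, x |-> x *m rmap p q), relevant for p <= q. *)
Record repdata (k : fieldType) (d : Order.disp_t) (T : finPOrderType d) := RepData {
  rdim : T -> nat;
  rmap : forall p q : T, 'M[k]_(rdim p, rdim q) }.

Section Reps.
Context {k : fieldType} {d : Order.disp_t} {T : finPOrderType d}.

Definition is_rep (R : repdata k T) : Prop :=
  (forall p, rmap R p p = 1%:M%R) /\
  (forall p q r, p <= q -> q <= r -> (rmap R p q *m rmap R q r = rmap R p r)%R).

Definition rep_iso (R1 R2 : repdata k T) : Prop :=
  exists (f : forall p, 'M[k]_(rdim R1 p, rdim R2 p))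
         (g : forall p, 'M[k]_(rdim R2 p, rdim R1 p)),
    (forall p, (f p *m g p = 1%:M)%R /\ (g p *m f p = 1%:M)%R) /\
    (forall p q, p <= q -> (rmap R1 p q *m f q = f p *m rmap R2 p q)%R).

Definition indicator (S : {set T}) : repdata k T :=
  @RepData k d T (fun p => nat_of_bool (p \in S))
    (fun p q => (\matrix_(i, j) (if (p \in S) && (q \in S) then 1 else 0))%R).
End Reps.

Arguments indicator k {d T} S.

Section Floor.
Context {dP dQ : Order.disp_t}
        {P : finJoinSemilatticeType dP} {Q : finJoinSemilatticeType dQ}.
Variables (psi : Q -> P) (q0 : Q).

(* ⌊p⌋_psi = join of {q : psi q <= p}; q0 is only a default for the empty
   case, which never occurs when ↑psi(Q) = P. *)
Definition floor (p : P) : Q :=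
  let s := [seq q <- enum Q | psi q <= p] in
  foldr (fun a b => a `|` b) (head q0 s) (behead s).

Definition floor_set (S : {set P}) : {set Q} := [set floor s | s in S].

Definition Lan {k : fieldType} (N : repdata k Q) : repdata k P :=
  @RepData k dP P (fun p => rdim N (floor p)) (fun p q => rmap N (floor p) (floor q)).
End Floor.

(* Main.v *)
Require Import Defs.
From HB Require Import structures.
From mathcomp Require Import all_boot all_order all_algebra.
From mathcomp Require Import zify.
Import Order.Theory.
Local Open Scope order_scope.

Lemma sum_le1 (k : fieldType) (n : nat) (F : 'I_n -> k) (k0 : 'I_n) :
  (n <= 1)%N -> (\sum_(i < n) F i = F k0)%R.
Proof.
move=> hn; rewrite (bigD1 k0) //= big1 ?GRing.addr0 // => i hi.
exfalso; move/negP: hi; apply; apply/eqP/val_inj => /=.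
have := ltn_ord i; have := ltn_ord k0; lia.
Qed.

Lemma ord_bool {b : bool} (i : 'I_(nat_of_bool b)) : b.
Proof. by case: b i => // -[]. Qed.

Lemma ord_eq1 {b : bool} (i j : 'I_(nat_of_bool b)) : i == j.
Proof. apply/eqP/val_inj => /=; have := ltn_ord i; have := ltn_ord j; case: b i j => /= *; lia. Qed.

Lemma indicator_rep (k : fieldType) (d : Order.disp_t) (T : finPOrderType d)
  (S : {set T}) : convex S -> is_rep (indicator k S).
Proof.
move=> hS; split.
- move=> p; apply/matrixP => i j; rewrite !mxE.
  have hp : p \in S := ord_bool i.
  by rewrite hp ord_eq1.
- move=> p q r hpq hqr; apply/matrixP => i j; rewrite !mxE.
  have hp : p \in S := ord_bool i.
  have hr : r \in S := ord_bool j.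
  have hq : q \in S := hS _ _ _ hp hr hpq hqr.
  have h0 : (0 < nat_of_bool (q \in S))%N by rewrite hq.
  rewrite (@sum_le1 _ _ _ (Ordinal (n := rdim (indicator k S) q) h0)); last exact: leq_b1.
  by rewrite !mxE hp hq hr GRing.mulr1.
Qed.

Lemma foldr_join_le (d : Order.disp_t) (T : joinSemilatticeType d) (a x : T) t :
  (foldr (fun a b => a `|` b) a t <= x) = (a <= x) && all (fun y => y <= x) t.
Proof. by elim: t => [|b t IH] /=; rewrite ?andbT // leUx IH andbCA. Qed.

Section Main.
Context {dP dQ : Order.disp_t}
        {P : finJoinSemilatticeType dP} {Q : finJoinSemilatticeType dQ}.

Lemma ex_min {d : Order.disp_t} {T : finPOrderType d} (X : {set T}) x :
  x \in X -> exists2 m, m \in minimals X & m <= x.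
Proof.
move=> xX.
have xA : x \in [set y in X | y <= x] by rewrite inE xX lexx.
case: (arg_minnP (fun y => #|[set z in X | z <= y]|) xA) => m.
move=> mA mmin; have : m \in [set y in X | y <= x] := mA; rewrite inE => /andP [mX mx].
exists m => //.
rewrite inE mX /=; apply/forallP => y; apply/implyP => yX; apply/implyP => ym.
have yA : y \in [set y in X | y <= x] by rewrite inE yX (le_trans ym mx).
have sub : [set z in X | z <= y] \subset [set z in X | z <= m].
  apply/subsetP => z; rewrite !inE => /andP [-> zy] /=; exact: le_trans zy ym.
have /eqP E : [set z in X | z <= y] == [set z in X | z <= m].
  by rewrite eqEcard sub mmin.
have : m \in [set z in X | z <= y] by rewrite E inE mX lexx.
rewrite inE => /andP [_ my]; by rewrite eq_le ym my.
Qed.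

Arguments ex_min {d T X x}.

Variables (psi : Q -> P) (q0 : Q).
Hypothesis Hmorph : forall x y : Q, psi (x `|` y) = psi x `|` psi y.
Hypothesis Hfull : forall q q' : Q, psi q <= psi q' -> q <= q'.
Hypothesis Hup : upset (psi @: [set: Q]) = [set: P].

Lemma psi_mono {x y} : x <= y -> psi x <= psi y.
Proof. by move/join_idPr => E; rewrite -E Hmorph leUl. Qed.

Lemma ex_below p : exists q, psi q <= p.
Proof.
have : p \in upset (psi @: [set: Q]) by rewrite Hup inE.
rewrite inE => /existsP [x /andP [/imsetP [q _ ->] h]]; by exists q.
Qed.

Lemma psi_foldr a t :
  psi (foldr (fun a b => a `|` b) a t) = foldr (fun a b => a `|` b) (psi a) (map psi t).
Proof. by elim: t => [|b t IH] //=; rewrite Hmorph IH. Qed.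

Lemma floor_ge q p : psi q <= p -> q <= floor psi q0 p.
Proof.
move=> hq; rewrite /floor.
have : q \in [seq q <- enum Q | psi q <= p] by rewrite mem_filter mem_enum andbT.
case: [seq q <- enum Q | psi q <= p] => [//|a t] /= qin.
have : all (fun y => y <= foldr (fun a b => a `|` b) a t) (a :: t).
  by rewrite /= -foldr_join_le lexx.
by move/allP; apply.
Qed.

Lemma psi_floor p : psi (floor psi q0 p) <= p.
Proof.
have [q hq] := ex_below p.
rewrite /floor.
have : all (fun q => psi q <= p) [seq q <- enum Q | psi q <= p] by apply: filter_all.
have : q \in [seq q <- enum Q | psi q <= p] by rewrite mem_filter mem_enum andbT.
case: [seq q <- enum Q | psi q <= p] => [//|a t] /= _ /andP [ha ht].
by rewrite psi_foldr foldr_join_le ha all_map.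
Qed.

Lemma floor_psi q : floor psi q0 (psi q) = q.
Proof. by apply/le_anti; rewrite floor_ge // andbT; apply: Hfull; apply: psi_floor. Qed.

Variables (S : {set P}).
Hypothesis HS : convex S.
Hypothesis Hmin : minimals S \subset psi @: [set: Q].
Hypothesis Hcov : cover_set S \subset psi @: [set: Q].

Lemma below_min {s} : s \in S -> exists2 qm, psi qm \in S & qm <= floor psi q0 s.
Proof.
move=> sS; have [m mmin ms] := ex_min sS.
have := subsetP Hmin m mmin; case/imsetP => qm _ em.
exists qm; last by apply: floor_ge; rewrite -em.
by move: mmin; rewrite inE em => /andP [].
Qed.

Lemma floor_in s : s \in S -> psi (floor psi q0 s) \in S.
Proof.
move=> sS; have [qm qmS hqm] := below_min sS.
exact: (HS _ _ _ qmS sS (psi_mono hqm) (psi_floor s)).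
Qed.

Lemma key p : (p \in S) = (floor psi q0 p \in floor_set psi q0 S).
Proof.
apply/idP/idP; first by move=> pS; apply/imsetP; exists p.
case/imsetP => s sS E.
have fS : psi (floor psi q0 p) \in S by rewrite E; apply: floor_in.
apply/negPn/negP => pn.
have pX : p \in upset S :\: S.
  rewrite !inE pn /=; apply/existsP; exists (psi (floor psi q0 p)).
  by rewrite fS psi_floor.
have [c cmin cp] := ex_min pX.
have := subsetP Hcov c cmin; case/imsetP => qc _ ec.
have hc : c <= psi (floor psi q0 p) by rewrite ec; apply: psi_mono; apply: floor_ge; rewrite -ec.
move: cmin; rewrite !inE => /andP [/andP [cS /existsP [x /andP [xS xc]]] _].
by move/negP: cS; apply; apply: (HS _ _ _ xS fS xc hc).
Qed.

Lemma floor_convex : convex (floor_set psi q0 S).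
Proof.
move=> x y z /imsetP [s1 s1S ->] /imsetP [s2 s2S ->] h1 h2.
apply/imsetP; exists (psi y); last by rewrite floor_psi.
have [qm qmS hqm] := below_min s1S.
apply: (HS _ _ _ qmS s2S).
  by apply: psi_mono; apply: le_trans h1.
exact: le_trans (psi_mono h2) (psi_floor s2).
Qed.

End Main.

Lemma iso_Lan (k : fieldType) (dP dQ : Order.disp_t)
  (P : finJoinSemilatticeType dP) (Q : finJoinSemilatticeType dQ)
  (psi : Q -> P) (q0 : Q) (S : {set P}) (F : {set Q}) :
  (forall p, (p \in S) = (floor psi q0 p \in F)) ->
  rep_iso (indicator k S) (Lan psi q0 (indicator k F)).
Proof.
move=> hSF.
exists (fun p => const_mx 1%R), (fun p => const_mx 1%R); split.
- move=> p; split; apply/matrixP => i j; rewrite !mxE.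
  + have hp : p \in S := ord_bool i.
    have hf : floor psi q0 p \in F by rewrite -hSF.
    have h0 : (0 < nat_of_bool (floor psi q0 p \in F))%N by rewrite hf.
    rewrite (@sum_le1 _ _ _ (Ordinal (n := rdim (Lan psi q0 (indicator k F)) p) h0)); last exact: leq_b1.
    by rewrite !mxE ord_eq1 GRing.mulr1.
  + have hf : floor psi q0 p \in F := ord_bool i.
    have hp : p \in S by rewrite hSF.
    have h0 : (0 < nat_of_bool (p \in S))%N by rewrite hp.
    rewrite (@sum_le1 _ _ _ (Ordinal (n := rdim (indicator k S) p) h0)); last exact: leq_b1.
    by rewrite !mxE ord_eq1 GRing.mulr1.
- move=> p q hpq; apply/matrixP => i j; rewrite !mxE.
  have hp : p \in S := ord_bool i.
  have hfq : floor psi q0 q \in F := ord_bool j.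
  have hq : q \in S by rewrite hSF.
  have hfp : floor psi q0 p \in F by rewrite -hSF.
  have h0 : (0 < nat_of_bool (q \in S))%N by rewrite hq.
  have h1 : (0 < nat_of_bool (floor psi q0 p \in F))%N by rewrite hfp.
  rewrite (@sum_le1 _ _ _ (Ordinal (n := rdim (indicator k S) q) h0)); last exact: leq_b1.
  rewrite (@sum_le1 _ _ _ (Ordinal (n := rdim (Lan psi q0 (indicator k F)) p) h1)); last exact: leq_b1.
  by rewrite !mxE hp hq hfp hfq.
Qed.

Theorem mainTheorem14 (k : fieldType) (dP dQ : Order.disp_t)
  (P : finJoinSemilatticeType dP) (Q : finJoinSemilatticeType dQ)
  (psi : Q -> P) (q0 : Q)
  (Hmorph : forall x y : Q, psi (x `|` y) = psi x `|` psi y)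
  (Hfull : forall q q' : Q, psi q <= psi q' -> q <= q')
  (Hup : upset (psi @: [set: Q]) = [set: P])
  (S : {set P}) (HS : spread S)
  (Hmin : minimals S \subset psi @: [set: Q])
  (Hcov : cover_set S \subset psi @: [set: Q]) :
  is_rep (indicator k (floor_set psi q0 S)) /\
  rep_iso (indicator k S) (Lan psi q0 (indicator k (floor_set psi q0 S))).
Proof.
case: HS => _ [Hconv _]; split.
  by apply: indicator_rep; apply: floor_convex.
apply: iso_Lan => p; exact: key.
Qed.
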